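(* The linear map $\Theta:\mathbf{H}_\mathrm{Pack}\to\mathbf{H}_{\mathrm{Pack}_1}$ defined by $\Theta(M)=\mathrm{Comp}(M)$ for $M\in\mathrm{Pack}$ is a bialgebra morphism from $(\mathbf{H}_\mathrm{Pack},\searrow,\blacktriangle)$ to $(\mathbf{H}_{\mathrm{Pack}_1},\rightarrow,\blacktriangle)$.
   Context: A packed matrix is a matrix with entries in $\mathbb{N}$ with no zero row and no zero column (the empty matrix $1$, with $0$ rows and columns, is packed); $\mathrm{Pack}$ is their set and $\mathbf{H}_\mathrm{Pack}$ the $\mathbb{Q}$-vector space with basis $\mathrm{Pack}$. $\mathcal{M}_{k,l}(\mathbb{N})$ denotes $k\times l$ matrices over $\mathbb{N}$; $p(M)$ is obtained from $M$ by deleting zero rows and columns. On $\mathbf{H}_\mathrm{Pack}$: $M\searrow M'=\begin{pmatrix}M&0\\0&M'\end{pmatrix}$ and, for $M$ with $k$ rows and $l$ columns, $\blacktriangle(M)=\sum_{M',M''\in\mathcal{M}_{k,l}(\mathbb{N}),\ M'+M''=M}p(M')\otimes p(M'')$, $\blacktriangle(1)=1\otimes1$. $\mathrm{Pack}_1$ is the set of packed row matrices $(a_1\ \cdots\ a_l)$, $a_i\geq1$, together with $1$; $\mathbf{H}_{\mathrm{Pack}_1}$ is the $\mathbb{Q}$-vector space with basis $\mathrm{Pack}_1$, with product concatenation $(a_1\cdots a_l)\rightarrow(b_1\cdots b_m)=(a_1\cdots a_lb_1\cdots b_m)$ and coproduct $\blacktriangle(M)=\sum_{M',M''\in\mathcal{M}_{1,l}(\mathbb{N}),\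 M'+M''=M}p(M')\otimes p(M'')$ (this is the Hopf algebra of noncommutative symmetric functions). For $M=(m_{i,j})$ with $k$ rows and $l$ columns, $\mathrm{Comp}(M)$ is the packed row matrix obtained by deleting the zeros from the sequence $(m_{1,1},\dots,m_{1,l},m_{2,1},\dots,m_{k,l})$ (reading the rows in order); $\mathrm{Comp}(1)=1$. *)

(* Defs.v *)
(* Free Q-vector spaces are represented by finite formal
   linear combinations (lists of (coefficient, basis element)); two such
   combinations denote the same vector iff all their coefficients agree. *)
From mathcomp Require Import all_boot all_order all_algebra.
Set Implicit Arguments. Unset Strict Implicit. Unset Printing Implicit Defensive.
Import GRing.Theory.

(* A matrix over N, as the list of its rows. *)
Definition mat := seq (seq nat).

Definition ncols (M : mat) : nat := size (head [::] M).
Definition rectangular (M : mat) : bool := all (fun r => size r == ncols M) M.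
Definition nzrow (r : seq nat) : bool := has (fun a => 0 < a) r.
Definition col (M : mat) (j : nat) : seq nat := [seq nth 0 r j | r <- M].

(* packed: no zero row and no zero column (the empty matrix [::] is packed) *)
Definition packed (M : mat) : bool :=
  rectangular M && all nzrow M && all (fun j => nzrow (col M j)) (iota 0 (ncols M)).

(* Pack_1 : packed row matrices (a_1 ... a_l), a_i >= 1, l >= 1, plus 1 = [::] *)
Definition pack1 (M : mat) : bool :=
  match M with
  | [::] => true
  | [:: r] => (0 < size r) && all (fun a => 0 < a) r
  | _ => false
  end.

Definition trmat (M : mat) : mat := [seq col M j | j <- iota 0 (ncols M)].

Definition pmat (M : mat) : mat :=
  trmat [seq c <- trmat [seq r <- M | nzrow r] | nzrow c].

(* M \searrow N: block diagonal matrix *)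
Definition diag (M N : mat) : mat :=
  [seq r ++ nseq (ncols N) 0 | r <- M] ++ [seq nseq (ncols M) 0 ++ r | r <- N].

(* product in H_Pack1: concatenation of row matrices *)
Definition conc (M N : mat) : mat :=
  match flatten M ++ flatten N with [::] => [::] | s => [:: s] end.

Definition Comp (M : mat) : mat :=
  match [seq a <- flatten M | a != 0] with [::] => [::] | s => [:: s] end.

(* all pairs (M', M'') of matrices over N of the same shape as M with M'+M''=M *)
Definition decomp_row (r : seq nat) : seq (seq nat * seq nat) :=
  foldr (fun m acc => [seq (i :: x.1, (m - i) :: x.2) | i <- iota 0 m.+1, x <- acc])
        [:: ([::], [::])] r.
Definition decomp (M : mat) : seq (mat * mat) :=
  foldr (fun r acc => [seq (x.1 :: y.1, x.2 :: y.2) | x <- decomp_row r, y <- acc])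
        [:: ([::], [::])] M.

Definition fvs (B : Type) := seq (rat * B).
Definition coef (B : eqType) (x : fvs B) (b : B) : rat :=
  (\sum_(p <- x | p.2 == b) p.1)%R.
Definition veq (B : eqType) (x y : fvs B) : Prop := forall b, coef x b = coef y b.
Notation "x =v y" := (veq x y) (at level 70).

Definition inHPack (x : fvs mat) : bool := all packed (map snd x).
Definition inHPack1 (x : fvs mat) : bool := all pack1 (map snd x).

Definition bilin (f : mat -> mat -> mat) (x y : fvs mat) : fvs mat :=
  [seq ((p.1 * q.1)%R, f p.2 q.2) | p <- x, q <- y].
Definition mulPack := bilin diag.
Definition mulPack1 := bilin conc.
Definition unitH : fvs mat := [:: (1%R, [::])].

(* linear extension of the coproduct; value in H (x) H, with basis pairs *)
Definition coprod (x : fvs mat) : fvs (mat * mat) :=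
  [seq (p.1, (pmat d.1, pmat d.2)) | p <- x, d <- decomp p.2].
Definition counit (x : fvs mat) : rat := coef x [::].

Definition Theta (x : fvs mat) : fvs mat := [seq (p.1, Comp p.2) | p <- x].
Definition Theta2 (x : fvs (mat * mat)) : fvs (mat * mat) :=
  [seq (p.1, (Comp p.2.1, Comp p.2.2)) | p <- x].

(* Main.v *)
Require Import Defs.
From mathcomp Require Import all_boot all_order all_algebra.
Require Import Defs.
Set Implicit Arguments. Unset Strict Implicit. Unset Printing Implicit Defensive.

Definition nz (s : seq nat) := [seq a <- s | a != 0].
Definition mk (s : seq nat) : mat := match s with [::] => [::] | _ => [:: s] end.

Lemma CompE M : Comp M = mk (nz (flatten M)).
Proof. by rewrite /Comp /mk /nz; case: (filter _ _). Qed.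

Lemma flatten_mk s : flatten (mk s) = s.
Proof. by case: s => //= a s; rewrite cats0. Qed.

Lemma nz_cat s t : nz (s ++ t) = nz s ++ nz t.
Proof. exact: filter_cat. Qed.

Lemma nz_nseq k : nz (nseq k 0) = [::].
Proof. by elim: k. Qed.

Lemma concE A B : conc A B = mk (flatten A ++ flatten B).
Proof. by rewrite /conc /mk; case: (_ ++ _). Qed.

Lemma Comp_diag M N : Comp (diag M N) = conc (Comp M) (Comp N).
Proof.
rewrite concE !CompE !flatten_mk /diag flatten_cat nz_cat.
congr (mk (_ ++ _)).
  by elim: M => //= r M IH; rewrite !nz_cat IH nz_nseq cats0.
by elim: N => //= r N IH; rewrite !nz_cat IH nz_nseq.
Qed.

Lemma pack1_Comp M : pack1 (Comp M).
Proof.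
rewrite CompE /nz; have : all (fun a => a != 0) [seq a <- flatten M | a != 0] by apply: filter_all.
case: (filter _ _) => //= a s /andP[a0 sa]; rewrite lt0n a0 /=.
by apply: sub_all sa => b; rewrite lt0n.
Qed.



Notation dr := decomp_row.

Lemma drS m r : dr (m :: r) =
  flatten (map (fun i => map (fun x => (i :: x.1, (m - i) :: x.2)) (dr r)) (iota 0 m.+1)).
Proof. by []. Qed.

Lemma decompS r M : decomp (r :: M) =
  flatten (map (fun x => map (fun y => (x.1 :: y.1, x.2 :: y.2)) (decomp M)) (dr r)).
Proof. by []. Qed.

Lemma flatten_map_flatten (A B : Type) (h : A -> seq B) (L : seq (seq A)) :
  flatten (map h (flatten L)) = flatten (map (fun l => flatten (map h l)) L).
Proof. by elim: L => //= l L IH; rewrite map_cat flatten_cat IH. Qed.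

Lemma drA (T : Type) (F : seq nat -> seq nat -> T) r t :
  map (fun x => F x.1 x.2) (dr (r ++ t)) =
  flatten (map (fun x => map (fun y => F (x.1 ++ y.1) (x.2 ++ y.2)) (dr t)) (dr r)).
Proof.
elim: r F => [|m r IH] F; first by rewrite /= cats0.
rewrite cat_cons !drS map_flatten flatten_map_flatten -!map_comp; congr flatten.
apply: eq_map => i /=; rewrite -!map_comp.
exact: (IH (fun a b => F (i :: a) ((m - i) :: b))).
Qed.

Lemma decompB (T : Type) (F : seq nat -> seq nat -> T) M :
  map (fun d => F (flatten d.1) (flatten d.2)) (decomp M) =
  map (fun x => F x.1 x.2) (dr (flatten M)).
Proof.
elim: M F => [|r M IH] F //.
rewrite decompS /= drA map_flatten -!map_comp; congr flatten.
apply: eq_map => x /=; rewrite -!map_comp.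
exact: (IH (fun a b => F (x.1 ++ a) (x.2 ++ b))).
Qed.

Lemma drC (T : Type) (F : seq nat -> seq nat -> T) r :
  map (fun x => F (nz x.1) (nz x.2)) (dr r) =
  map (fun x => F (nz x.1) (nz x.2)) (dr (nz r)).
Proof.
elim: r F => [|m r IH] F //.
case: m => [|m].
  rewrite drS /= cats0 -map_comp.
  exact: (IH F).
have -> : nz (m.+1 :: r) = m.+1 :: nz r by [].
rewrite !drS !map_flatten -!map_comp; congr flatten.
apply: eq_map => i /=; rewrite -!map_comp.
exact: (IH (fun a b => F (if i != 0 then i :: a else a)
                         (if m.+1 - i != 0 then (m.+1 - i) :: b else b))).
Qed.

Lemma nz_nil r : (nz r == [::]) = ~~ nzrow r.
Proof.
rewrite /nzrow has_filter negbK /nz.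
by rewrite (@eq_filter _ (fun a => a != 0) (fun a => 0 < a)) // => a; rewrite lt0n.
Qed.

Lemma nz_flatten L : nz (flatten L) = flatten (map nz L).
Proof. by elim: L => //= l L IH; rewrite nz_cat IH. Qed.

Lemma nz_filter_rows N : nz (flatten (filter nzrow N)) = nz (flatten N).
Proof.
elim: N => //= r N IH; case: ifP => H; rewrite /= !nz_cat IH //.
by move: (nz_nil r); rewrite H => /eqP ->.
Qed.

Lemma nz_map_filter (f : nat -> nat) (P : pred nat) s :
  {in s, forall j, ~~ P j -> f j = 0} -> nz (map f (filter P s)) = nz (map f s).
Proof.
elim: s => //= j s IH H.
have IH' := IH (fun k ks => H k (mem_behead (s:=j::s) ks)).
case: ifP => Pj /=.
  by rewrite /nz /= -!/(nz _) IH'.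
by rewrite /nz /= (H j (mem_head _ _)) ?Pj //= -!/(nz _) IH'.
Qed.

Lemma pmatE N : rectangular N ->
  pmat N = let R := filter nzrow N in
           let J := filter (fun j => nzrow (col R j)) (iota 0 (ncols N)) in
           if J is [::] then [::] else map (fun r => map (nth 0 r) J) R.
Proof.
move=> rectN /=.
set R := filter nzrow N; set J := filter _ _.
case: (boolP (R == [::])) => [/eqP R0|Rn0].
  by rewrite /pmat -/R R0; case: J.
have nR : ncols R = ncols N.
  case ER: R Rn0 => [|r R'] // _.
  have : r \in R by rewrite ER mem_head.
  rewrite mem_filter => /andP[_ rN].
  by move/allP: rectN => /(_ r rN) /eqP.
rewrite /pmat -/R /trmat nR filter_map.
have -> : [seq x <- iota 0 (ncols N) | preim (col R) nzrow x] = J by [].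
case EJ: J => [|j J'] //=.
rewrite {1}/ncols /= size_map.
rewrite -[in RHS](mkseq_nth [::] R) /mkseq -map_comp.
apply/eq_in_map => i; rewrite mem_iota add0n => /= iR.
rewrite /col -/(col _ _) /= -map_comp.
by congr cons; [|apply: eq_map => k /=]; rewrite (nth_map [::]).
Qed.

Lemma rect_row N r : rectangular N -> r \in N -> size r = ncols N.
Proof. by move/allP=> H /H /eqP. Qed.

Lemma Comp_pmat N : rectangular N -> Comp (pmat N) = Comp N.
Proof.
move=> rectN; rewrite (pmatE rectN) /=.
set R := filter nzrow N; set J := filter _ _.
have key : nz (flatten (map (fun r => map (nth 0 r) J) R)) = nz (flatten N).
  rewrite -(nz_filter_rows N) -/R !nz_flatten -map_comp.
  congr flatten.
  apply/eq_in_map => r rR /=.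
  have rN : r \in N by move: rR; rewrite mem_filter => /andP[].
  rewrite nz_map_filter.
    by rewrite map_nth_iota0 -(rect_row rectN rN) ?take_size.
  move=> k _; rewrite /nzrow => /hasPn H.
  have : nth 0 r k \in col R k by rewrite /col (map_f (fun r => nth 0 r k) rR).
  by move/H; rewrite lt0n negbK => /eqP.
rewrite !CompE -key; case: J key => //= _.
by elim: R.
Qed.

Lemma pmat1 r : pmat [:: r] = mk (nz r).
Proof.
have rect : rectangular [:: r] by rewrite /rectangular /= eqxx.
rewrite (pmatE rect) /=.
case: ifP => Hr; last first.
  by move: (nz_nil r); rewrite Hr => /eqP ->; case: (filter _ _).
set J := filter _ _.
have E : map (nth 0 r) J = nz r.
  rewrite /J (@eq_filter _ _ (preim (nth 0 r) (fun a => 0 < a))); last first.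
    by move=> j /=; rewrite /nzrow /= orbF.
  rewrite -filter_map /ncols /= map_nth_iota0 // take_size /nz.
  by apply: eq_filter => a; rewrite lt0n.
by rewrite -E; case: J E.
Qed.

Lemma dr_size r x : x \in dr r -> size x.1 = size r /\ size x.2 = size r.
Proof.
elim: r x => [|m r IH] x; first by rewrite inE => /eqP ->.
rewrite drS => /flatten_mapP[i _] /mapP[y /IH[H1 H2] ->] /=.
by rewrite H1 H2.
Qed.

Lemma decomp_size M d : d \in decomp M -> map size d.1 = map size M /\ map size d.2 = map size M.
Proof.
elim: M d => [|r M IH] d; first by rewrite inE => /eqP ->.
rewrite decompS => /flatten_mapP[x /dr_size[H1 H2]] /mapP[y /IH[H3 H4] ->] /=.
by rewrite H1 H2 H3 H4.
Qed.

Lemma rect_size N : rectangular N = all (fun k => k == head 0 (map size N)) (map size N).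
Proof. by case: N => //= r N; rewrite all_map. Qed.

Lemma decomp1 r : decomp [:: r] = map (fun x => ([:: x.1], [:: x.2])) (dr r).
Proof. by rewrite decompS /=; elim: (dr r) => //= x s ->. Qed.

Lemma co M : rectangular M ->
  map (fun d => (Comp (pmat d.1), Comp (pmat d.2))) (decomp M) =
  map (fun d => (pmat d.1, pmat d.2)) (decomp (Comp M)).
Proof.
move=> rectM.
have -> : map (fun d => (Comp (pmat d.1), Comp (pmat d.2))) (decomp M) =
          map (fun d => (mk (nz (flatten d.1)), mk (nz (flatten d.2)))) (decomp M).
  apply/eq_in_map => d /decomp_size[H1 H2].
  by rewrite !Comp_pmat ?CompE // rect_size ?H1 ?H2 -rect_size.
rewrite (decompB (fun a b => (mk (nz a), mk (nz b)))).
rewrite (drC (fun a b => (mk a, mk b))) CompE.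
case: (nz (flatten M)) => [|a s] //.
rewrite decomp1 -map_comp; apply: eq_map => x /=.
by rewrite !pmat1.
Qed.

Lemma Comp_nil M : packed M -> (Comp M == [::]) = (M == [::]).
Proof.
case: M => // r M /andP[/andP[_ /= /andP[Hr _]] _].
rewrite CompE /= nz_cat.
by case E: (nz r) => [|a s] //; move: (nz_nil r); rewrite E Hr.
Qed.

Theorem mainTheorem4 :
  (forall x : fvs mat, inHPack x -> inHPack1 (Theta x)) /\
  (forall x y : fvs mat, inHPack x -> inHPack y ->
     Theta (mulPack x y) =v mulPack1 (Theta x) (Theta y)) /\
  Theta unitH =v unitH /\
  (forall x : fvs mat, inHPack x -> Theta2 (coprod x) =v coprod (Theta x)) /\
  (forall x : fvs mat, inHPack x -> counit (Theta x) = counit x).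
Proof.
split.
  move=> x _; rewrite /inHPack1 /Theta -map_comp all_map.
  by apply/allP => p _; apply: pack1_Comp.
split.
  move=> x y _ _.
  have -> : Theta (mulPack x y) = mulPack1 (Theta x) (Theta y); last by [].
  rewrite /Theta /mulPack /mulPack1 /bilin map_flatten -!map_comp; congr flatten.
  apply: eq_map => p /=; rewrite -!map_comp; apply: eq_map => q /=.
  by rewrite Comp_diag.
split; first by [].
split.
  move=> x Hx.
  have -> : Theta2 (coprod x) = coprod (Theta x); last by [].
  rewrite /Theta2 /coprod /Theta map_flatten -!map_comp; congr flatten.
  apply/eq_in_map => p px /=.
  have rect : rectangular p.2.
    by move/allP: Hx => /(_ p.2 (map_f _ px)) /andP[/andP[]].
  have := congr1 (map (pair p.1)) (co rect).
  by rewrite -!map_comp.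
move=> x Hx; rewrite /counit /coef /Theta big_map.
elim: x Hx => [|p x IH] /= Hx; first by rewrite !big_nil.
case/andP: Hx => Hp Hx.
by rewrite !big_cons /= (Comp_nil Hp) IH.
Qed.
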